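(* Let $\mathbf A\in\mathbb C^{m\times n}$, $\mathbf y\in\mathbb C^{1\times n}$, consider the system $\mathbf x\mathbf A=\mathbf y$ with unknown row vector $\mathbf x\in\mathbb C^{1\times m}$, and let $\mathbf x^{0}=\mathbf y\mathbf A^{+}=(x^{0}_1,\dots,x^{0}_m)$. Put $\mathbf g=\mathbf y\mathbf A^{*}$. (i) If $\operatorname{rank}\mathbf A=m$, then for all $i=1,\dots,m$, $x^{0}_i=\dfrac{\det\left((\mathbf A\mathbf A^{*})_{i.}(\mathbf g)\right)}{\det(\mathbf A\mathbf A^{*})}$. (ii) If $\operatorname{rank}\mathbf A=r\le n<m$, then for all $i=1,\dots,m$, $x^{0}_i=\dfrac{\sum_{\alpha\in I_{r,m}\{i\}}\left|\left((\mathbf A\mathbf A^{*})_{i.}(\mathbf g)\right)^{\alpha}_{\alpha}\right|}{d_r(\mathbf A\mathbf A^{*})}$.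
   Context: $\mathbf A^{+}$ is the Moore–Penrose inverse: the unique $\mathbf X$ with $\mathbf A\mathbf X\mathbf A=\mathbf A$, $\mathbf X\mathbf A\mathbf X=\mathbf X$, $(\mathbf A\mathbf X)^{*}=\mathbf A\mathbf X$, $(\mathbf X\mathbf A)^{*}=\mathbf X\mathbf A$. For a square matrix $\mathbf M$, $\mathbf M_{i.}(\mathbf c)$ is obtained from $\mathbf M$ by replacing its $i$-th row by the row vector $\mathbf c$. $I_{r,m}$ is the set of strictly increasing sequences of $r$ elements of $\{1,\dots,m\}$, $I_{r,m}\{i\}=\{\alpha\in I_{r,m}:i\in\alpha\}$, $\mathbf M^{\alpha}_{\alpha}$ is the principal submatrix indexed by $\alpha$, $|\cdot|$ is the determinant, and $d_r(\mathbf M)=\sum_{\alpha\in I_{r,m}}|\mathbf M^{\alpha}_{\alpha}|$ is the sum of principal minors of order $r$. *)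

(* Defs.v *)
From HB Require Import structures.
From mathcomp Require Import all_boot all_order all_algebra.
Set Implicit Arguments.
Unset Strict Implicit.
Unset Printing Implicit Defensive.
Import Order.TTheory GRing.Theory Num.Theory.
Local Open Scope ring_scope.

Definition ctrmx (C : numClosedFieldType) (m n : nat) (A : 'M[C]_(m, n))
  : 'M[C]_(n, m) := (map_mx Num.conj A)^T.

Definition is_MP_inverse (C : numClosedFieldType) (m n : nat)
  (A : 'M[C]_(m, n)) (X : 'M[C]_(n, m)) : Prop :=
  [/\ A *m X *m A = A, X *m A *m X = X,
      ctrmx (A *m X) = A *m X & ctrmx (X *m A) = X *m A].

Definition row_repl (R : Type) (m : nat) (M : 'M[R]_m) (i : 'I_m)
  (c : 'rV[R]_m) : 'M[R]_m :=
  \matrix_(k, l) (if k == i then c ord0 l else M k l).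

(* alpha : 'I_r -> 'I_m is strictly increasing: an element of I_{r,m}. *)
Definition strict_incr (r m : nat) (alpha : {ffun 'I_r -> 'I_m}) : bool :=
  [forall k : 'I_r, forall l : 'I_r, (k < l)%N ==> (alpha k < alpha l)%N].

Definition pminor (R : comRingType) (m r : nat) (M : 'M[R]_m)
  (alpha : {ffun 'I_r -> 'I_m}) : R :=
  \det (\matrix_(k, l) M (alpha k) (alpha l)).

Definition dsum (R : comRingType) (m : nat) (r : nat) (M : 'M[R]_m) : R :=
  \sum_(alpha : {ffun 'I_r -> 'I_m} | strict_incr alpha) pminor M alpha.

(* Main.v *)
Require Import Defs.
From HB Require Import structures.
From mathcomp Require Import all_boot all_order all_algebra fingroup perm.
From mathcomp Require Import zify.
Import Order.TTheory GRing.Theory Num.Theory.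
Local Open Scope ring_scope.
Set Implicit Arguments.
Unset Strict Implicit.
Unset Printing Implicit Defensive.
Section Gen.
Variable R : comRingType.

Lemma det_row_repl n (N : 'M[R]_n) i (v : 'rV[R]_n) :
  \det (row_repl N i v) = (v *m \adj N) 0 i.
Proof.
rewrite (expand_det_row _ i) mxE; apply: eq_bigr => j _.
rewrite !mxE eqxx; congr (_ * _).
rewrite /cofactor; congr (_ * \det _); apply/matrixP => k l.
by rewrite !mxE eq_sym (negbTE (neq_lift _ _)).
Qed.

Definition sub1 n (B : 'M[R]_n) (T : {set 'I_n}) : 'M[R]_n :=
  \matrix_(k, l) (if k \in T then B k l else (k == l)%:R).

Lemma prod_add_sets n (a b : 'I_n -> R) :
  \prod_k (a k + b k) = \sum_(T : {set 'I_n}) (\prod_(k in T) a k) * \prod_(k in ~: T) b k.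
Proof.
have -> : \prod_k (a k + b k) = \prod_k \sum_(c : bool) (if c then a k else b k).
  by apply: eq_bigr => k _; rewrite big_bool.
rewrite bigA_distr_bigA /=.
rewrite (reindex (fun T : {set 'I_n} => [ffun k => k \in T])) /=; last first.
  apply: onW_bij; exists (fun f : {ffun 'I_n -> bool} => [set k | f k]) => [T|f].
    by apply/setP => k; rewrite inE ffunE.
  by apply/ffunP => k; rewrite !ffunE inE.
apply: eq_bigr => T _.
rewrite (bigID (mem T)) /=; congr (_ * _).
  by apply: eq_bigr => k kT; rewrite ffunE kT.
by apply: eq_big => [k|k]; rewrite ?inE // ffunE => /negbTE ->.
Qed.

Lemma sub1_prod n (B : 'M[R]_n) (d : 'I_n -> R) (T : {set 'I_n}) (s : 'S_n):
 \prod_(k in ~: T) d k * \prod_i (sub1 B T) i (s i) = (\prod_(k in T) B k (s k)) *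
        \prod_(k in ~: T) ((k == s k)%:R * d k).
Proof.
rewrite (bigID (mem T) predT) /= big_split /=.
have -> : \prod_(i | i \in T) sub1 B T i (s i) = \prod_(k in T) B k (s k).
  by apply: eq_bigr => k kT; rewrite mxE kT.
have -> : \prod_(i | i \notin T) sub1 B T i (s i) = \prod_(k in ~: T) (k == s k)%:R.
  by apply: eq_big => [k|k]; rewrite ?inE // => kT; rewrite mxE (negbTE kT).
by rewrite mulrCA [X in _ * X]mulrC.
Qed.
Lemma det_add_diag n (B : 'M[R]_n) (d : 'I_n -> R) :
  \det (B + \matrix_(k, l) ((k == l)%:R * d k)) =
  \sum_(T : {set 'I_n}) (\prod_(k in ~: T) d k) * \det (sub1 B T).
Proof.
have HE : forall (T : {set 'I_n}), (\prod_(k in ~: T) d k) * \det (sub1 B T) =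
   \sum_(s : 'S_n) (-1) ^+ s * ((\prod_(k in T) B k (s k)) *
        \prod_(k in ~: T) ((k == s k)%:R * d k)).
  move=> T; rewrite /determinant big_distrr /=; apply: eq_bigr => s _.
  by rewrite mulrCA sub1_prod.
under [RHS]eq_bigr do rewrite HE.
rewrite exchange_big /= /determinant; apply: eq_bigr => s _.
rewrite -big_distrr /=; congr (_ * _).
rewrite -prod_add_sets; apply: eq_bigr => k _.
by rewrite !mxE.
Qed.
End Gen.
Section Gen2.
Variable R : comRingType.

Lemma det_reindex p n (e : p = n) (h : 'I_p -> 'I_n) (hinj : injective h)
  (M : 'M[R]_n) : \det (\matrix_(i, j) M (h i) (h j)) = \det M.
Proof.
subst p.
pose sg := perm hinj.
have -> : \matrix_(i, j) M (h i) (h j) = perm_mx sg *m M *m perm_mx sg^-1.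
  by rewrite -row_permE -col_permE; apply/matrixP => i j; rewrite !mxE !permE.
rewrite !det_mulmx !det_perm odd_permV mulrC mulrA -signr_addb addbb expr0 mul1r.
by [].
Qed.

Lemma det_sub1_inj n s (a : 'I_s -> 'I_n) (B : 'M[R]_n) (T : {set 'I_n}) :
  injective a -> (forall x, (x \in T) = (x \in codom a)) ->
  \det (sub1 B T) = \det (\matrix_(k, l) B (a k) (a l)).
Proof.
move=> ainj HT.
have cT : #|T| = s by rewrite (eq_card HT) card_codom // card_ord.
have cC : #|~: T| = (n - s)%N.
  have H : (s + #|~: T| = n)%N by rewrite -cT cardsC card_ord.
  exact: (canRL (addKn s) H).
have sn : (s + (n - s))%N = n by rewrite -cC -cT cardsC; apply: card_ord.
pose c (j : 'I_(n - s)) : 'I_n := @enum_val _ (mem (~: T)) (cast_ord (esym cC) j).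
have cnT : forall j, c j \notin T.
  by move=> j; have := enum_valP (cast_ord (esym cC) j); rewrite inE.
have aT : forall k, a k \in T by move=> k; rewrite HT codom_f.
pose h (i : 'I_(s + (n - s))) := match split i with inl k => a k | inr j => c j end.
have hL : forall k, h (lshift _ k) = a k by move=> k; rewrite /h (unsplitK (inl k)).
have hR : forall j, h (rshift _ j) = c j by move=> j; rewrite /h (unsplitK (inr j)).
have hinj : injective h.
  move=> i1 i2; rewrite -[i1]splitK -[i2]splitK.
  case: (split i1) => k1; case: (split i2) => k2 /=; rewrite ?hL ?hR.
  - by move/ainj => ->.
  - by move=> e; have := cnT k2; rewrite -e aT.
  - by move=> e; have := cnT k1; rewrite e aT.
  - by move/enum_val_inj/cast_ord_inj => ->.
rewrite -(det_reindex sn hinj).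
set B' := \matrix_(i, j) _.
rewrite -[B']submxK.
have -> : dlsubmx B' = 0.
  apply/matrixP => i j; rewrite !mxE hL hR (negbTE (cnT i)).
  by case: eqP => // e; have := cnT i; rewrite e aT.
have -> : drsubmx B' = 1%:M.
  apply/matrixP => i j; rewrite !mxE !hR (negbTE (cnT i)).
  by rewrite (inj_eq (fun _ _ e => cast_ord_inj (enum_val_inj e))).
rewrite det_ublock det1 mulr1; congr (\det _).
by apply/matrixP => i j; rewrite !mxE !hL aT.
Qed.
End Gen2.
Definition ltO n := fun x y : 'I_n => (x < y)%N.

Lemma ltO_trans n : transitive (@ltO n).
Proof. by move=> x y z; apply: ltn_trans. Qed.

Lemma ltO_irr n : irreflexive (@ltO n).
Proof. by move=> x; apply: ltnn. Qed.

Lemma sorted_enum_ord n : sorted (@ltO n) (enum 'I_n).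
Proof.
have := iota_ltn_sorted 0 n; rewrite -val_enum_ord sorted_map.
by [].
Qed.

Lemma sorted_enum_set n (T : {set 'I_n}) : sorted (@ltO n) (enum T).
Proof.
have -> : enum T = [seq x <- enum 'I_n | x \in T].
  by rewrite -!deprecated_filter_index_enum filter_predT.
exact: sorted_filter (@ltO_trans n) _ _ (sorted_enum_ord n).
Qed.

Lemma strict_inj r n (a : {ffun 'I_r -> 'I_n}) : strict_incr a -> injective a.
Proof.
move=> /forallP H k l e; case: (ltngtP k l) => hkl; last exact: val_inj.
- by have := implyP (forallP (H k) l) hkl; rewrite e ltnn.
- by have := implyP (forallP (H l) k) hkl; rewrite e ltnn.
Qed.

Lemma sorted_codom r n (a : {ffun 'I_r -> 'I_n}) : strict_incr a -> sorted (@ltO n) (codom a).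
Proof.
move=> /forallP H; rewrite codomE sorted_map.
apply: sub_sorted (sorted_enum_ord r) => k l hkl.
exact: implyP (forallP (H k) l) hkl.
Qed.

Lemma strict_uniq r n (a b : {ffun 'I_r -> 'I_n}) : strict_incr a -> strict_incr b ->
  [set x in codom a] = [set x in codom b] -> a = b.
Proof.
move=> sa sb e.
have : codom a = codom b.
  apply: (irr_sorted_eq (@ltO_trans n) (@ltO_irr n)); rewrite ?sorted_codom //.
  by move=> x; have := congr1 (fun S : {set 'I_n} => x \in S) e; rewrite /= !inE.
rewrite !codomE => /eq_in_map H; apply/ffunP => k; exact: H (mem_enum _ k).
Qed.

Lemma strict_exists r n (T : {set 'I_n}) : #|T| = r ->
  exists2 a : {ffun 'I_r -> 'I_n}, strict_incr a & [set x in codom a] = T.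
Proof.
move=> HT.
pose a := [ffun k : 'I_r => @enum_val _ (mem T) (cast_ord (esym HT) k)].
exists a.
  apply/forallP => k; apply/forallP => l; apply/implyP => hkl.
  rewrite !ffunE; set x0 := enum_val (cast_ord (esym HT) k).
  rewrite /x0 !(enum_val_nth x0).
  apply: (sorted_ltn_nth (@ltO_trans n) x0 (sorted_enum_set T)); rewrite ?inE -?cardE //=.
  - by rewrite HT.
  - by rewrite HT.
apply/setP => x; rewrite inE; apply/idP/idP.
  by case/codomP => k ->; rewrite ffunE; apply: enum_valP.
move=> xT; apply/codomP; exists (cast_ord HT (enum_rank_in xT x)).
by rewrite ffunE cast_ordK enum_rankK_in.
Qed.
Lemma sum_strict (V : nmodType) n r (P : pred {set 'I_n}) (F : {set 'I_n} -> V) :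
  \sum_(T : {set 'I_n} | (#|T| == r) && P T) F T =
  \sum_(a : {ffun 'I_r -> 'I_n} | strict_incr a && P [set x in codom a]) F [set x in codom a].
Proof.
pose h (a : {ffun 'I_r -> 'I_n}) := [set x in codom a].
pose A := [set a : {ffun 'I_r -> 'I_n} | strict_incr a && P (h a)].
transitivity (\sum_(a in A) F (h a)); last by apply: eq_bigl => a; rewrite inE.
have inj : {in A &, injective h}.
  move=> a b; rewrite !inE => /andP[sa _] /andP[sb _]; exact: strict_uniq.
rewrite -(big_imset F inj).
apply: eq_bigl => T; apply/idP/imsetP.
  case/andP => /eqP cT PT; have [a sa ha] := strict_exists cT.
  by exists a; [rewrite inE sa /h ha PT | rewrite /h ha].
case=> a; rewrite inE => /andP[sa Pa] ->; rewrite Pa andbT.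
rewrite /h cardsE card_codom ?card_ord //; exact: strict_inj.
Qed.
Lemma rank_rowsub (F : fieldType) m m' n (f : 'I_m' -> 'I_m) (A : 'M[F]_(m, n)) :
  (\rank (rowsub f A) <= \rank A)%N.
Proof. by rewrite rowsubE mxrankM_maxr. Qed.

Lemma rank_colsub (F : fieldType) m n n' (f : 'I_n' -> 'I_n) (A : 'M[F]_(m, n)) :
  (\rank (colsub f A) <= \rank A)%N.
Proof.
rewrite -mxrank_tr -[X in (_ <= X)%N]mxrank_tr.
have -> : (colsub f A)^T = rowsub f A^T by apply/matrixP => i j; rewrite !mxE.
exact: rank_rowsub.
Qed.

Lemma det_sub1_rank (F : fieldType) n (B : 'M[F]_n) (T : {set 'I_n}) :
  (\rank B < #|T|)%N -> \det (sub1 B T) = 0.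
Proof.
move=> hr.
pose a := @enum_val _ (mem T).
have ainj : injective a := @enum_val_inj _ (mem T).
rewrite (@det_sub1_inj _ _ _ a B T ainj); last first.
  move=> x; apply/idP/idP => [xT|/codomP[k ->]]; last exact: enum_valP.
  by apply/codomP; exists (enum_rank_in xT x); rewrite /a enum_rankK_in.
set S := \matrix_(k, l) _.
have -> : S = rowsub a (colsub a B) by apply/matrixP => k l; rewrite !mxE.
apply/eqP; apply: contraTT hr => hdet; rewrite -leqNgt.
have u : rowsub a (colsub a B) \in unitmx by rewrite unitmxE unitfE.
rewrite -(mxrank_unit u) /=.
exact: leq_trans (rank_rowsub _ _) (rank_colsub _ _).
Qed.
Section Poly.
Variable F : comRingType.

Definition Xd n (D : {set 'I_n}) : 'M[{poly F}]_n :=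
  \matrix_(k, l) ((k == l)%:R * (if k \in D then 'X else 0)).

Lemma sub1_map n (B : 'M[F]_n) T :
  sub1 (map_mx polyC B) T = map_mx polyC (sub1 B T).
Proof. by apply/matrixP => k l; rewrite !mxE; case: (k \in T) => //; rewrite rmorph_nat. Qed.

Lemma det_poly_exp n (B : 'M[F]_n) (D : {set 'I_n}) :
  \det (map_mx polyC B + Xd D) =
  \sum_(T : {set 'I_n} | ~: T \subset D) 'X^(n - #|T|) * (\det (sub1 B T))%:P.
Proof.
rewrite det_add_diag (bigID (fun T : {set 'I_n} => ~: T \subset D)) /=.
rewrite [X in _ + X]big1 ?addr0; last first.
  move=> T /subsetPn[k kT kD].
  by rewrite (bigD1 k) //= (negbTE kD) mul0r mul0r.
apply: eq_bigr => T sT.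
rewrite sub1_map det_map_mx; congr (_ * _).
rewrite (eq_bigr (fun _ => 'X)); last by move=> k kT; rewrite (subsetP sT k kT).
rewrite prodr_const; congr (_ ^+ _).
have H : (#|T| + #|~: T| = n)%N by rewrite cardsC card_ord.
exact: (canRL (addKn #|T|) H).
Qed.

Lemma coef_exp n (c : {set 'I_n} -> F) (P : pred {set 'I_n}) j :
  (\sum_(T | P T) 'X^(n - #|T|) * (c T)%:P)`_j =
  \sum_(T | P T && (n - #|T| == j)%N) c T.
Proof.
rewrite coef_sum big_mkcondr /=; apply: eq_bigr => T _.
rewrite coefXnM coefC.
case: (ltngtP j (n - #|T|)) => h.
- by [].
- by rewrite subn_eq0 leqNgt h.
- by rewrite h subnn eqxx.
Qed.
End Poly.
Arguments Xd {F n} D.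
Section Conj.
Variable C : numClosedFieldType.

Lemma ctrmxM m n p (A : 'M[C]_(m, n)) (B : 'M[C]_(n, p)) :
  ctrmx (A *m B) = ctrmx B *m ctrmx A.
Proof. by rewrite /ctrmx map_mxM trmx_mul. Qed.

Lemma ctrmxK m n (A : 'M[C]_(m, n)) : ctrmx (ctrmx A) = A.
Proof. by apply/matrixP => i j; rewrite !mxE conjCK. Qed.

Lemma rank_ctrmx m n (A : 'M[C]_(m, n)) : \rank (ctrmx A) = \rank A.
Proof. by rewrite /ctrmx mxrank_tr mxrank_map. Qed.

Lemma rank_AAt m n (A : 'M[C]_(m, n)) : \rank (A *m ctrmx A) = \rank A.
Proof.
apply/eqP; rewrite eqn_leq mxrankM_maxl /=.
have sub : (kermx (A *m ctrmx A) <= kermx A)%MS.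
  apply/rV_subP => v /sub_kermxP H; apply/sub_kermxP.
  set w := v *m A.
  have H0 : w *m ctrmx w = 0 by rewrite ctrmxM mulmxA -(mulmxA v) H mul0mx.
  have := congr1 (fun M : 'M[C]_1 => M 0 0) H0; rewrite !mxE /= => H1.
  have P0 : forall k : 'I_n, true -> 0 <= w 0 k * ctrmx w k 0.
    by move=> k _; rewrite !mxE mul_conjC_ge0.
  apply/rowP => j; rewrite [RHS]mxE; apply/eqP; rewrite -mul_conjC_eq0.
  by have := @psumr_eq0P _ _ _ _ P0 H1 j isT; rewrite !mxE => ->.
have := mxrankS sub; rewrite !mxrank_ker.
have := rank_leq_row A; have := rank_leq_row (A *m ctrmx A).
lia.
Qed.
End Conj.
Section Spec.
Variable C : numClosedFieldType.

Lemma coef_low (m : nat) (M : 'M[C]_m) j : (j < m - \rank M)%N ->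
  (\det (map_mx polyC M + Xd [set: 'I_m]))`_j = 0.
Proof.
move=> hj; rewrite det_poly_exp coef_exp big1 // => T /andP[_ /eqP hT].
apply: det_sub1_rank.
have : (#|T| <= m)%N by rewrite -[X in (_ <= X)%N](card_ord m) max_card.
lia.
Qed.

Lemma coef_herm_neq0 (m : nat) (M : 'M[C]_m) : ctrmx M = M ->
  (\det (map_mx polyC M + Xd [set: 'I_m]))`_(m - \rank M) != 0.
Proof.
move=> hM.
have nM : M \is normalmx.
  apply/normalmxP; have -> : (M ^t* )%sesqui = M.
    by rewrite -[RHS]hM /ctrmx map_trmx.
  by [].
have HM := orthomx_spectralP nM.
set P := spectralmx M in HM; set dd := spectral_diag M in HM.
have Pu : P \is unitarymx by apply: spectral_unitarymx.
have Pi : P \in unitmx by apply: spectral_unit.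
pose Z := [set k | dd 0 k == 0].
pose Q := \prod_(k | dd 0 k != 0) ('X + (dd 0 k)%:P).
have Hdet : \det (map_mx polyC M + Xd [set: 'I_m]) = 'X^#|Z| * Q.
  have -> : map_mx polyC M + Xd [set: 'I_m] =
      map_mx polyC (invmx P) *m diag_mx (\row_k ('X + (dd 0 k)%:P)) *m map_mx polyC P.
    have -> : diag_mx (\row_k ('X + (dd 0 k)%:P)) = 'X%:M + map_mx polyC (diag_mx dd).
      by apply/matrixP => i j; rewrite !mxE; case: eqP => //= _; rewrite ?mulr1n ?mulr0n ?addr0.
    rewrite mulmxDr mulmxDl -!map_mxM -HM addrC; congr (_ + _).
    rewrite mul_mx_scalar -scalemxAl -map_mxM mulVmx // map_mx1.
    by apply/matrixP => i j; rewrite !mxE inE mulrC.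
  rewrite (det_mulmx (_ *m _)) !det_mulmx det_diag mulrAC -det_mulmx -map_mxM mulVmx // map_mx1 det1 mul1r.
  rewrite (bigID (fun k => dd 0 k == 0)) /=; congr (_ * _).
  rewrite (eq_bigr (fun _ => 'X)); last by move=> k /eqP hk; rewrite mxE hk addr0.
  by rewrite prodr_const cardsE.
  by apply: eq_bigr => k _; rewrite mxE.
have Q0 : Q`_0 != 0.
  rewrite -horner_coef0 horner_prod; apply/prodf_neq0 => k hk.
  by rewrite hornerD hornerX hornerC add0r.
have zle : (#|Z| <= m - \rank M)%N.
  pose f := @enum_val _ (mem Z).
  pose S := rowsub f P.
  have SM : S *m M = 0.
    have -> : S *m M = rowsub f (P *m M) by rewrite /S rowsubE mulmxA -rowsubE.
    rewrite HM !mulmxA mulmxV // mul1mx mul_diag_mx.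
    apply/matrixP => k l; rewrite !mxE.
    by have := enum_valP k; rewrite inE => /eqP ->; rewrite mul0r.
  have Su : S \is unitarymx.
    apply/unitarymxP; apply/matrixP => k l.
    have := unitarymxP Pu => /matrixP/(_ (f k) (f l)).
    rewrite [in X in X -> _]mxE [1%:M _ _]mxE => H.
    rewrite [LHS]mxE [RHS]mxE.
    rewrite /f (inj_eq enum_val_inj) in H; rewrite -H.
    by apply: eq_bigr => j _; rewrite !mxE.
  have := mxrankS (introT sub_kermxP SM).
  by rewrite mxrank_ker (mxrank_unitary Su).
have hz : #|Z| = (m - \rank M)%N.
  apply/eqP; rewrite eqn_leq zle /= leqNgt; apply/negP => hlt.
  have := coef_low hlt; rewrite Hdet coefXnM ltnn subnn => /eqP.
  by rewrite (negbTE Q0).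
by rewrite -hz Hdet coefXnM ltnn subnn.
Qed.
End Spec.
Lemma Xd_setT (F : comRingType) m : Xd [set: 'I_m] = ('X%:M : 'M[{poly F}]_m).
Proof. apply/matrixP => i j; rewrite !mxE in_setT.
by rewrite mulr_natl. Qed.

Lemma row_repl_poly (F : comRingType) m (M : 'M[F]_m) i (v : 'rV[F]_m) :
  map_mx polyC (row_repl M i v) + Xd [set~ i] =
  row_repl (map_mx polyC M + Xd [set: 'I_m]) i (map_mx polyC v).
Proof.
apply/matrixP => k l; rewrite !mxE !inE; case: eqP => [->|_] //=.
by rewrite mulr0 addr0.
Qed.

Lemma pminor_sub1 (R : comRingType) r m (B : 'M[R]_m) (a : {ffun 'I_r -> 'I_m}) :
  strict_incr a -> pminor B a = \det (sub1 B [set x in codom a]).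
Proof.
move=> sa; rewrite /pminor (@det_sub1_inj _ _ _ a B) //; first exact: strict_inj.
by move=> x; rewrite inE.
Qed.

Lemma nat_aux m r t : (t <= m)%N -> (m - t)%N = (m - r).-1 -> (0 < m - r)%N -> (r < t)%N.
Proof. lia. Qed.

Unset Implicit Arguments.
Set Strict Implicit.

Theorem theorem3p3 (C : numClosedFieldType) (m n : nat)
  (A : 'M[C]_(m, n)) (y : 'rV[C]_n) (Aplus : 'M[C]_(n, m)) :
  is_MP_inverse A Aplus ->
  let x0 := y *m Aplus in
  let g := y *m ctrmx A in
  (\rank A = m ->
     forall i : 'I_m,
       x0 ord0 i = \det (row_repl (A *m ctrmx A) i g) / \det (A *m ctrmx A))
  /\
  (forall r : nat, \rank A = r -> (r <= n)%N -> (n < m)%N ->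
     forall i : 'I_m,
       x0 ord0 i =
         (\sum_(alpha : {ffun 'I_r -> 'I_m} | strict_incr alpha && (i \in codom alpha))
             pminor (row_repl (A *m ctrmx A) i g) alpha)
         / dsum r (A *m ctrmx A)).
Proof.
move=> [h1 h2 h3 h4] x0 g.
set M := A *m ctrmx A.
have key : Aplus *m A *m ctrmx A = ctrmx A by rewrite -{1}h4 -ctrmxM mulmxA h1.
have x0M : x0 *m M = g by rewrite /x0 /g /M mulmxA -(mulmxA y) -mulmxA key.
have Hrepl : forall i, \det (row_repl M i g) = x0 0 i * \det M.
  move=> i; rewrite det_row_repl -x0M -mulmxA mul_mx_adj mul_mx_scalar mxE mulrC.
  by [].
have rM : \rank M = \rank A by apply: rank_AAt.
split.
  move=> hr i.
  have Mu : \det M != 0.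
    have : M \in unitmx by rewrite -row_free_unit /row_free rM hr.
    by rewrite unitmxE unitfE.
  by rewrite Hrepl mulfK.
move=> r hr _ _ i.
have rleq : (r <= m)%N by rewrite -hr rank_leq_row.
have hermM : ctrmx M = M by rewrite /M ctrmxM ctrmxK.
have cardT : forall T : {set 'I_m}, (#|T| <= m)%N.
  by move=> T; rewrite -[X in (_ <= X)%N](card_ord m) max_card.
set N := map_mx polyC M + Xd [set: 'I_m].
have dNE : dsum r M = (\det N)`_(m - r).
  rewrite /dsum /N det_poly_exp coef_exp.
  transitivity (\sum_(T : {set 'I_m} | (#|T| == r) && true) \det (sub1 M T)).
    rewrite (@sum_strict _ _ r (fun _ => true)); apply: eq_big => [a|a sa].
      by rewrite andbT.
    exact: pminor_sub1.
  apply: eq_bigl => T; rewrite subsetT andbT /=.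
  have hT := cardT T; apply/eqP/eqP => [->|e] //.
  by rewrite -(subKn hT) e subKn.
have numE : \sum_(alpha : {ffun 'I_r -> 'I_m} | strict_incr alpha && (i \in codom alpha))
             pminor (row_repl M i g) alpha =
     (\det (row_repl N i (map_mx polyC g)))`_(m - r).
  rewrite -row_repl_poly det_poly_exp coef_exp.
  transitivity (\sum_(T : {set 'I_m} | (#|T| == r) && (i \in T)) \det (sub1 (row_repl M i g) T)).
    rewrite (@sum_strict _ _ r (fun T => i \in T)); apply: eq_big => [a|a /andP[sa _]].
      by rewrite inE.
    exact: pminor_sub1.
  apply: eq_bigl => T; rewrite setCS sub1set.
  have hT := cardT T; rewrite andbC; congr (_ && _); apply/eqP/eqP => [->|e] //.
  by rewrite -(subKn hT) e subKn.
have polyId : \det (row_repl N i (map_mx polyC g)) =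
    (x0 0 i)%:P * \det N - 'X * \det (row_repl N i (map_mx polyC x0)).
  rewrite !det_row_repl.
  have gE : map_mx polyC g = map_mx polyC x0 *m N - 'X *: map_mx polyC x0.
    by rewrite /N Xd_setT mulmxDr mul_mx_scalar -map_mxM x0M addrK.
  rewrite gE mulmxBl -mulmxA mul_mx_adj mul_mx_scalar -scalemxAl !mxE.
  by rewrite mulrC.
have x0E : x0 = y *m Aplus *m ctrmx Aplus *m ctrmx A.
  by rewrite -mulmxA -ctrmxM h3 /x0 -!mulmxA (mulmxA Aplus) h2.
have rk : (\rank (row_repl M i x0) <= r)%N.
  rewrite -hr -(rank_ctrmx A); apply: mxrankS; apply/row_subP => k.
  have -> : row k (row_repl M i x0) = if k == i then x0 else row k A *m ctrmx A.
    apply/rowP => l; rewrite [LHS]mxE [LHS]mxE; case: (k == i); first by rewrite mxE.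
    by rewrite !mxE; apply: eq_bigr => j _; rewrite !mxE.
  by case: (k == i); rewrite ?x0E submxMl.
have vanish : (0 < m - r)%N ->
    (\det (row_repl N i (map_mx polyC x0)))`_(m - r).-1 = 0.
  move=> hmr; rewrite -row_repl_poly det_poly_exp coef_exp big1 // => T /andP[_ /eqP hT].
  apply: det_sub1_rank; apply: leq_ltn_trans rk _.
  exact: (nat_aux (cardT T) hT hmr).
have dn0 : dsum r M != 0.
  by rewrite dNE -hr -rM; apply: coef_herm_neq0.
transitivity ((\det (row_repl N i (map_mx polyC g)))`_(m - r) / dsum r M); last first.
  by congr (_ / _); symmetry; exact: numE.
rewrite polyId coefB coefCM coefXM -dNE.
case: eqP => [_|hne]; first by rewrite subr0 mulfK.
by rewrite vanish ?subr0 ?mulfK //; lia.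
Qed.
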